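(* Let $\mathcal{F}=(W,\preceq,\mathcal{V})$ be a finite poset model and $w_1,w_2\in W$. If $w_1\approx_\pm w_2$ then $w_1\equiv_\eta w_2$.
   Context: Fix a set PL of proposition letters. A poset model is $\mathcal{F}=(W,\preceq,\mathcal{V})$ with $(W,\preceq)$ a partial order and $\mathcal{V}:\mathrm{PL}\to\mathcal{P}(W)$. $[m;n]=\{i\in\mathbb{N}:m\le i\le n\}$, $[m;n)=\{i:m\le i<n\}$. An undirected path of length $\ell$ from $w$ is $\pi:[0;\ell]\to W$ with $\pi(0)=w$ and, for each $i\in[0;\ell)$, $\pi(i)\preceq\pi(i+1)$ or $\pi(i+1)\preceq\pi(i)$. A $\downarrow$-path is an undirected path of length $\ell\ge1$ with $\pi(\ell)\preceq\pi(\ell-1)$. A $\pm$-path is a $\downarrow$-path of length $\ell\ge2$ with $\pi(0)\preceq\pi(1)$. SLCS$_\eta$ formulas: $\Phi::=p\mid\neg\Phi\mid\Phi_1\wedge\Phi_2\mid\eta(\Phi_1,\Phi_2)$; $w\models p$ iff $w\in\mathcal{V}(p)$; negation, conjunction standard; $w\models\eta(\Phi_1,\Phi_2)$ iff some $\pm$-path $\pi:[0;\ell]\to W$ from $w$ has $\pi(\ell)\models\Phi_2$ and $\pi(i)\models\Phi_1$ for all $i\in[0;\ell)$. $w_1\equiv_\eta w_2$ means $w_1,w_2$ satisfy the same SLCS$_\eta$ formulas. A weak $\pm$-bisimulation is a symmetric relation $B\subseteq W\times W$ such that whenever $B(w_1,w_2)$: (1) for every $p$, $w_1\in\mathcal{V}(p)$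 iff $w_2\in\mathcal{V}(p)$; (2) for all $u_1,d_1\in W$ with ($w_1\preceq u_1$ or $u_1\preceq w_1$) and $d_1\preceq u_1$, there is a $\pm$-path $\pi_2:[0;\ell_2]\to W$ from $w_2$ with $B(d_1,\pi_2(\ell_2))$ and, for all $j\in[0;\ell_2)$, $B(w_1,\pi_2(j))$ or $B(u_1,\pi_2(j))$. $w_1\approx_\pm w_2$ iff some weak $\pm$-bisimulation contains $(w_1,w_2)$. *)

(* Defs.v *)
From mathcomp Require Import all_boot.
Set Implicit Arguments. Unset Strict Implicit. Unset Printing Implicit Defensive.

Record poset_model (PL : Type) := PosetModel {
  pm_W :> finType;
  pm_le : rel pm_W;
  pm_V : PL -> pred pm_W;
  pm_refl : reflexive pm_le;
  pm_antisym : antisymmetric pm_le;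
  pm_trans : transitive pm_le
}.

Section Defs.
Variables (PL : Type) (F : poset_model PL).
Local Notation W := (pm_W F).
Local Notation le := (@pm_le PL F).

(* undirected path of length l from w: pi : [0;l] -> W, represented by nat -> W
   with only values on [0;l] relevant *)
Definition undirected_path (pi : nat -> W) (l : nat) (w : W) : Prop :=
  pi 0 = w /\ forall i, i < l -> le (pi i) (pi i.+1) \/ le (pi i.+1) (pi i).

Definition down_path (pi : nat -> W) (l : nat) (w : W) : Prop :=
  undirected_path pi l w /\ 1 <= l /\ le (pi l) (pi l.-1).

Definition pm_path (pi : nat -> W) (l : nat) (w : W) : Prop :=
  down_path pi l w /\ 2 <= l /\ le (pi 0) (pi 1).

End Defs.

Inductive slcs_eta (PL : Type) : Type :=
| SAtom : PL -> slcs_eta PL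
| SNeg : slcs_eta PL -> slcs_eta PL
| SAnd : slcs_eta PL -> slcs_eta PL -> slcs_eta PL
| SEta : slcs_eta PL -> slcs_eta PL -> slcs_eta PL.

Fixpoint sat (PL : Type) (F : poset_model PL) (w : F) (phi : slcs_eta PL) : Prop :=
  match phi with
  | SAtom p => @pm_V PL F p w
  | SNeg phi1 => ~ sat w phi1
  | SAnd phi1 phi2 => sat w phi1 /\ sat w phi2
  | SEta phi1 phi2 => exists (pi : nat -> F) (l : nat),
      pm_path pi l w /\ sat (pi l) phi2 /\ (forall i, i < l -> sat (pi i) phi1)
  end.

Definition eta_equiv (PL : Type) (F : poset_model PL) (w1 w2 : F) : Prop :=
  forall phi : slcs_eta PL, sat w1 phi <-> sat w2 phi.

Definition weak_pm_bisim (PL : Type) (F : poset_model PL) (B : F -> F -> Prop) : Prop :=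
  (forall x y, B x y -> B y x) /\
  forall w1 w2, B w1 w2 ->
    (forall p, @pm_V PL F p w1 <-> @pm_V PL F p w2) /\
    (forall u1 d1 : F, (pm_le w1 u1 \/ pm_le u1 w1) -> pm_le d1 u1 ->
       exists (pi2 : nat -> F) (l2 : nat),
         pm_path pi2 l2 w2 /\ B d1 (pi2 l2) /\
         (forall j, j < l2 -> B w1 (pi2 j) \/ B u1 (pi2 j))).

Definition weak_pm_bisimilar (PL : Type) (F : poset_model PL) (w1 w2 : F) : Prop :=
  exists B : F -> F -> Prop, weak_pm_bisim B /\ B w1 w2.

(* Main.v *)
Require Import Defs.
From mathcomp Require Import all_boot.
From mathcomp Require Import zify.

Section Sim.
Variables (PL : Type) (F : poset_model PL) (B : F -> F -> Prop).
Hypothesis HB : weak_pm_bisim B.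

Definition catp (f g : nat -> F) (l1 : nat) (j : nat) : F :=
  if j <= l1 then f j else g (j - l1).

Lemma step_sim (a b x' : F) : (pm_le a b \/ pm_le b a) -> B a x' ->
  exists (pi' : nat -> F) l', pm_path pi' l' x' /\ B b (pi' l') /\
    (forall j, j < l' -> B a (pi' j) \/ B b (pi' j)).
Proof.
case: HB => _ Hc Hab Bax.
have [_ Hs] := Hc _ _ Bax.
case: Hab => Hab.
- have [pi' [l' [P1 [P2 P3]]]] := Hs b b (or_introl Hab) (pm_refl b).
  by exists pi', l'.
- have [pi' [l' [P1 [P2 P3]]]] := Hs a b (or_introl (pm_refl a)) Hab.
  exists pi', l'; split => //; split => // j Hj.
  by case: (P3 j Hj) => ?; left.
Qed.

Lemma sim l : forall (pi : nat -> F) x', 1 <= l ->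
  (forall i, i < l -> pm_le (pi i) (pi i.+1) \/ pm_le (pi i.+1) (pi i)) ->
  pm_le (pi l) (pi l.-1) -> B (pi 0) x' ->
  exists (pi' : nat -> F) l', pm_path pi' l' x' /\ B (pi l) (pi' l') /\
    (forall j, j < l' -> exists2 i, i < l & B (pi i) (pi' j)).
Proof.
elim: l => [//|k IH] pi x' _ Hu Hd Bx.
case: k IH Hu Hd => [|k] IH Hu Hd.
- case: HB => _ Hc.
  have [_ Hs] := Hc _ _ Bx.
  have [pi' [l' [P1 [P2 P3]]]] := Hs (pi 0) (pi 1) (or_introl (pm_refl _)) Hd.
  exists pi', l'; split => //; split => // j Hj.
  by exists 0 => //; case: (P3 j Hj).
- have [pi1 [l1 [[[[Q0 Qu] [Q1 Qd]] [Ql Qs]] [P2 P3]]]] :=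
    @step_sim (pi 0) (pi 1) x' (Hu 0 isT) Bx.
  have [pi2 [l2 [[[[R0 Ru] [R1 Rd]] [Rl Rs]] [S2 S3]]]] :=
    IH (fun i => pi i.+1) (pi1 l1) isT (fun i Hi => Hu i.+1 Hi) Hd P2.
  exists (catp pi1 pi2 l1), (l1 + l2).
  split; last split.
  + split; last (split; [lia|]).
    * split; first split.
      -- by rewrite /catp leq0n.
      -- move=> i Hi; rewrite /catp.
         case: (ltnP i l1) => Hil.
         ++ rewrite (ltnW Hil); exact: Qu.
         ++ idtac.
            case: (leqP i l1) => Hil'.
            ** have -> : i = l1 by lia.
               rewrite subSnn -R0.
               by have := Ru 0 ltac:(lia).
            ** rewrite subSn //; apply: Ru; lia.
      -- split; first lia.
         rewrite /catp.
         have -> : (l1 + l2 <= l1) = false by apply/negbTE; rewrite -ltnNge; lia.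
         have -> : ((l1 + l2).-1 <= l1) = false by apply/negbTE; rewrite -ltnNge; lia.
         have -> : l1 + l2 - l1 = l2 by lia.
         by have -> : (l1 + l2).-1 - l1 = l2.-1 by lia.
    * rewrite /catp; have -> : (1 <= l1) by lia.
      by rewrite leq0n.
  + rewrite /catp.
    have -> : (l1 + l2 <= l1) = false by apply/negbTE; rewrite -ltnNge; lia.
    by have -> : l1 + l2 - l1 = l2 by lia.
  + move=> j Hj; rewrite /catp.
    case: (leqP j l1) => Hjl.
    * case: (ltnP j l1) => Hjl'.
      -- by case: (P3 j Hjl') => ?; [exists 0 | exists 1].
      -- have -> : j = l1 by lia.
         by exists 1.
    * have [i Hi Bi] := S3 (j - l1) ltac:(lia).
      by exists i.+1.
Qed.

End Sim.

Theorem lemma12 (PL : Type) (F : poset_model PL) (w1 w2 : F) :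
  weak_pm_bisimilar w1 w2 -> eta_equiv w1 w2.
Proof.
case=> B [HB Bw].
have [Bsym Hc] := HB.
suff H : forall phi x y, B x y -> sat x phi -> sat y phi.
  by move=> phi; split; apply: H => //; apply: Bsym.
elim=> [p|phi IH|phi1 IH1 phi2 IH2|phi1 IH1 phi2 IH2] x y Bxy /=.
- by have [Hv _] := Hc _ _ Bxy; move/Hv.
- move=> Hn Hy; apply: Hn; apply: (IH y x) => //; exact: Bsym.
- by case=> ??; split; [apply: (IH1 x) | apply: (IH2 x)].
- case=> pi [l [[[[P0 Pu] [Pl1 Pd]] [Pl2 Pup]] [S2 S1]]].
  have Bp : B (pi 0) y by rewrite P0.
  have [pi' [l' [Hp [B2 B1]]]] := @sim PL F B HB l pi y Pl1 Pu Pd Bp.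
  exists pi', l'; split => //; split.
  + exact: (IH2 (pi l)).
  + move=> j Hj; have [i Hi Bi] := B1 j Hj; exact: (IH1 (pi i)) (S1 i Hi).
Qed.
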